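(* Let $N\ge1$, $M\ge1$, let $L$ be an invertible linear transformation of $\mathbb R^N$ and $u_1,\ldots,u_M\in\mathbb R^N$, and let $$\Lambda:=\bigcup_{j=1}^M L^*\left(u_j+\mathbb Z^N\right)\subset\mathbb R^N.$$ Suppose there exist $M$ points $a_1,\ldots,a_M\in\Lambda$ such that $\Lambda(a_i,a_k)\not\subset\Lambda$ for all $i\ne k$. Then $M$ is the smallest possible number in such a representation: whenever $\Lambda=\bigcup_{j=1}^{M_0}L_0^*\left(\tilde u_j+\mathbb Z^N\right)$ for some invertible linear transformation $L_0$ of $\mathbb R^N$, some integer $M_0\ge1$ and some vectors $\tilde u_1,\ldots,\tilde u_{M_0}\in\mathbb R^N$, we have $M\le M_0$.
   Context: $L^*$ denotes the adjoint of $L$. For two points $a,b\in\mathbb R^N$, $\Lambda(a,b):=\{a+k(b-a): k\in\mathbb Z\}$ is the one-dimensional lattice generated by $a$ and $b$. *)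

(* Defs.v *)
From mathcomp Require Import all_boot all_order all_algebra.
From mathcomp Require Import reals.
Set Implicit Arguments. Unset Strict Implicit. Unset Printing Implicit Defensive.
Import Order.TTheory GRing.Theory Num.Theory.
Local Open Scope ring_scope.

(* Vectors of R^N are column vectors 'cV[R]_N; a linear map of R^N is a
   square matrix A acting by v |-> A *m v; its adjoint L^* (w.r.t. the
   standard inner product) is the transpose A^T. *)

Definition int_vec (R : realType) (N : nat) (v : 'cV[R]_N) : Prop :=
  forall i : 'I_N, v i 0 \is a Num.int.

Definition union_lattice (R : realType) (N M : nat) (A : 'M[R]_N)
  (u : 'I_M -> 'cV[R]_N) (x : 'cV[R]_N) : Prop :=
  exists (j : 'I_M) (z : 'cV[R]_N), int_vec z /\ x = A^T *m (u j + z).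

Definition lattice1 (R : realType) (N : nat) (a b : 'cV[R]_N) (x : 'cV[R]_N)
  : Prop := exists k : int, x = a + k%:~R *: (b - a).

(* Main.v *)
Require Import Defs.
From mathcomp Require Import all_boot all_order all_algebra.
Import Order.TTheory GRing.Theory Num.Theory.
From mathcomp Require Import reals.
From Stdlib Require Import ClassicalEpsilon.
Local Open Scope ring_scope.

Theorem lemma2p4 (R : realType) (N M : nat) (hN : (1 <= N)%N) (hM : (1 <= M)%N)
  (A : 'M[R]_N) (hA : A \in unitmx) (u : 'I_M -> 'cV[R]_N)
  (a : 'I_M -> 'cV[R]_N)
  (ha : forall i, union_lattice A u (a i))
  (hsep : forall i k : 'I_M, i != k ->
     ~ (forall x, lattice1 (a i) (a k) x -> union_lattice A u x)) :
  forall (M0 : nat) (A0 : 'M[R]_N) (u0 : 'I_M0 -> 'cV[R]_N),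
    (1 <= M0)%N -> A0 \in unitmx ->
    (forall x, union_lattice A u x <-> union_lattice A0 u0 x) ->
    (M <= M0)%N.
Proof.
move=> M0 A0 u0 _ _ hiff.
have hex : forall i, { j : 'I_M0 | exists z : 'cV[R]_N, int_vec z /\ a i = A0^T *m (u0 j + z) }.
  move=> i; apply: constructive_indefinite_description.
  by have [j [z [hz e]]] := proj1 (hiff (a i)) (ha i); exists j, z.
pose f i := proj1_sig (hex i).
have finj : injective f.
  move=> i k hik; apply/eqP; apply/negPn/negP => ne.
  apply: (hsep i k ne) => x [m ->]; apply/hiff.
  have [z1 [hz1 e1]] := proj2_sig (hex i).
  have [z2 [hz2 e2]] := proj2_sig (hex k).
  rewrite -/(f i) in e1; rewrite -/(f k) -hik in e2.
  exists (f i), (z1 + m%:~R *: (z2 - z1)); split.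
    move=> r; rewrite !mxE; apply: rpredD => //; apply: rpredM; first exact: intr_int.
    by rewrite ?mxE; apply: rpredB.
  rewrite e1 e2 -mulmxBr scalemxAr -mulmxDr; congr (_ *m _).
  rewrite addrA; congr (_ + _ *: _); rewrite opprD addrACA subrr add0r //.
by have := @leq_card _ _ f finj; rewrite !card_ord.
Qed.
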